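(* Let $\mathcal F_0:=\{f\in L^2(0,1):|f|<1\text{ a.e.}\}$ and, with $\mathrm{id}(y)=y$ on $(0,1)$, $\hat J(f):=\|f-\mathrm{id}\|_{L^2(0,1)}^2-\frac34\langle f-\mathrm{id},f+\mathrm{id}\rangle_{L^2(0,1)}^2$. Then $\hat J(f)>0$ for all $f\in\mathcal F_0\setminus\{\mathrm{id}\}$. *)

(* Defs.v *)
From HB Require Import structures.
From mathcomp Require Import all_boot all_order all_algebra.
From mathcomp Require Import all_classical all_reals all_analysis.
Unset Printing Implicit Defensive.
Import Order.TTheory GRing.Theory Num.Theory.
Local Open Scope classical_set_scope.
Local Open Scope ring_scope.

Definition I01 (R : realType) : set R := `]0%R, 1%R[.

Definition L2dist2_id (R : realType) (f : R -> R) : R :=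
  Rintegral (lebesgue_measure (R:=R)) (I01 R) (fun y => (f y - y) ^+ 2).

Definition inner_fmid_fpid (R : realType) (f : R -> R) : R :=
  Rintegral (lebesgue_measure (R:=R)) (I01 R) (fun y => (f y - y) * (f y + y)).

Definition Jhat (R : realType) (f : R -> R) : R :=
  L2dist2_id R f - (3%:R / 4%:R) * (inner_fmid_fpid R f) ^+ 2.

(* Main.v *)
Require Import Defs.
From HB Require Import structures.
From mathcomp Require Import all_boot all_order all_algebra.
From mathcomp Require Import all_classical all_reals all_analysis.
From mathcomp.analysis Require Import measurable_realfun.
From mathcomp Require Import ring lra.
Import Order.TTheory GRing.Theory Num.Theory.
Local Open Scope classical_set_scope.
Local Open Scope ring_scope.

Section Helpers.
Context {R : realType}.
Local Notation mu := (@lebesgue_measure R).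

Lemma Rint_eq0 (D : set R) (h : R -> R) : measurable D ->
  mu.-integrable D (EFin \o h) -> (forall x, D x -> 0 <= h x) ->
  Rintegral mu D h = 0 ->
  exists N, [/\ measurable N, mu N = 0%E & forall x, D x -> h x != 0 -> N x].
Proof.
move=> mD ih h0 H0.
have mh := measurable_int mu ih.
have e : (\int[mu]_(x in D) (h x)%:E = \int[mu]_(x in D) `|(h x)%:E|)%E.
  by apply: eq_integral => x /set_mem Dx; rewrite gee0_abs // lee_fin h0.
have fin : (\int[mu]_(x in D) `|(h x)%:E|)%E \is a fin_num.
  by rewrite -e; exact: integrable_fin_num.
have H1 : (\int[mu]_(x in D) `|(h x)%:E| = 0)%E.
  by rewrite -(fineK fin) -e; move: H0; rewrite /Rintegral => ->.
have [N [mN N0 sub]] := (ae_eq_integral_abs mu mD mh).1 H1.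
exists N; split => // x Dx hx0; apply: sub => /= /(_ Dx) /= [] /eqP.
by rewrite (negbTE hx0).
Qed.

Lemma Rint_gt0 (D : set R) (h : R -> R) : measurable D ->
  mu.-integrable D (EFin \o h) -> (0 < mu D)%E ->
  {ae mu, forall x, D x -> 0 < h x} -> 0 < Rintegral mu D h.
Proof.
move=> mD ih muD hpos.
have mh := measurable_int mu ih.
have e : (\int[mu]_(x in D) (h x)%:E = \int[mu]_(x in D) `|(h x)%:E|)%E.
  apply: ae_eq_integral => //.
  - rewrite (_ : (fun x => `|(h x)%:E|%E) = EFin \o (Num.norm \o h)); last first.
      by apply/funext => x.
    apply/measurable_EFinP; apply: measurableT_comp => //.
    exact/measurable_EFinP.
  - near=> x => Dx.
    by rewrite gee0_abs // lee_fin ltW // (near hpos x).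
have fin : (\int[mu]_(x in D) `|(h x)%:E|)%E \is a fin_num.
  by rewrite -e; exact: integrable_fin_num.
rewrite /Rintegral e lt0r fine_ge0 ?integral_ge0 // andbT.
apply/negP => /eqP H0.
have H1 : (\int[mu]_(x in D) `|(h x)%:E| = 0)%E.
  by rewrite -(fineK fin) H0.
have := (ae_eq_integral_abs mu mD mh).1 H1 => H2.
have [N [mN N0 sub]] := negligibleU hpos H2.
move: muD; rewrite lt_neqAle => /andP[/eqP + _]; apply.
apply/esym/eqP; rewrite -measure_le0 -N0 le_measure ?inE //.
move=> x Dx; apply: sub => /=.
have [p1|np1] := pselect (D x -> 0 < h x); last by left.
right => p2; move: (p1 Dx); rewrite -lte_fin (p2 Dx) /= ltxx //.
Unshelve. all: by end_near. Qed.

Lemma int_horner (p : {poly R}) (A : set R) a b : A `<=` `[a, b] ->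
  measurable A -> mu.-integrable A (EFin \o horner p).
Proof.
move=> Aab mA; apply: (@integrableS _ _ _ mu `[a, b]) => //.
apply: continuous_compact_integrable; first exact: segment_compact.
by apply: continuous_in_subspaceT => x _; exact: continuous_horner.
Qed.

Lemma int_poly_cc a b (p : {poly R}) : a < b ->
  Rintegral mu `[a, b] (horner p^`()) = p.[b] - p.[a].
Proof.
move=> ab.
have dF (q : {poly R}) : derivable_oo_LRcontinuous (horner q) a b.
  split.
  + move=> x _; exact: derivable_horner.
  + apply: cvg_at_right_filter; exact: continuous_horner.
  + apply: cvg_at_left_filter; exact: continuous_horner.
rewrite /Rintegral (continuous_FTC2 (F := horner p)) //.
- exact: derivable_oo_LRcontinuous_within (dF _).
- by move=> x _; rewrite -derivE.
Qed.

Lemma int_poly_oo a b (p : {poly R}) : a < b ->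
  Rintegral mu `]a, b[ (horner p^`()) = p.[b] - p.[a].
Proof.
move=> ab; rewrite Rintegral_itv_bndo_bndc; last first.
  by apply: (@int_horner _ _ a b) => //; apply: subset_itv; rewrite bnd_simp.
rewrite Rintegral_itv_obnd_cbnd; last first.
  by apply: (@int_horner _ _ a b) => //; apply: subset_itv; rewrite bnd_simp.
exact: int_poly_cc.
Qed.

Lemma int_poly_co a b (p : {poly R}) : a < b ->
  Rintegral mu `[a, b[ (horner p^`()) = p.[b] - p.[a].
Proof.
move=> ab; rewrite Rintegral_itv_bndo_bndc; last first.
  by apply: (@int_horner _ _ a b) => //; apply: subset_itv; rewrite bnd_simp.
exact: int_poly_cc.
Qed.

Definition Pq (al be ga : R) : {poly R} :=
  al *: 'X + (be / 2) *: 'X^2 + (ga / 3) *: 'X^3.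

Lemma quad_deriv (al be ga y : R) :
  ((Pq al be ga)^`()).[y] = al + be * y + ga * y ^+ 2.
Proof.
rewrite /Pq !derivD !derivZ derivX !derivXn !hornerE /=.
by field.
Qed.

Lemma Pq_eval (al be ga y : R) :
  (Pq al be ga).[y] = al * y + be / 2 * y ^+ 2 + ga / 3 * y ^+ 3.
Proof. by rewrite /Pq !hornerE. Qed.

Lemma quad_oo (al be ga a b : R) : a < b ->
  Rintegral mu `]a, b[ (fun y => al + be * y + ga * y ^+ 2) =
  al * b + be / 2 * b ^+ 2 + ga / 3 * b ^+ 3
  - (al * a + be / 2 * a ^+ 2 + ga / 3 * a ^+ 3).
Proof.
move=> ab; rewrite -!Pq_eval -(int_poly_oo _ _ (Pq al be ga) ab).
by apply: eq_Rintegral => y _; exact/esym/quad_deriv.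
Qed.

Lemma quad_co (al be ga a b : R) : a < b ->
  Rintegral mu `[a, b[ (fun y => al + be * y + ga * y ^+ 2) =
  al * b + be / 2 * b ^+ 2 + ga / 3 * b ^+ 3
  - (al * a + be / 2 * a ^+ 2 + ga / 3 * a ^+ 3).
Proof.
move=> ab; rewrite -!Pq_eval -(int_poly_co _ _ (Pq al be ga) ab).
by apply: eq_Rintegral => y _; exact/esym/quad_deriv.
Qed.

Lemma quad_int (al be ga a b : R) (A : set R) : A `<=` `[a, b] ->
  measurable A ->
  mu.-integrable A (EFin \o (fun y => al + be * y + ga * y ^+ 2)).
Proof.
move=> Aab mA.
have H := @int_horner (Pq al be ga)^`() A a b Aab mA.
move: H; apply: eq_integrable => //.
by move=> y _ /=; rewrite quad_deriv.
Qed.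

Lemma intD' (A : set R) (g1 g2 : R -> R) : measurable A ->
  mu.-integrable A (EFin \o g1) -> mu.-integrable A (EFin \o g2) ->
  mu.-integrable A (EFin \o (fun y => g1 y + g2 y)).
Proof.
move=> mA i1 i2; have H := @integrableD _ _ _ mu A mA _ _ i1 i2; move: H; apply: eq_integrable => //.
Qed.

Lemma intZ' (A : set R) (k : R) (g : R -> R) : measurable A ->
  mu.-integrable A (EFin \o g) ->
  mu.-integrable A (EFin \o (fun y => k * g y)).
Proof.
move=> mA i; have H := @integrableZl _ _ _ mu A mA k _ i; move: H; apply: eq_integrable => //.
Qed.

Lemma ae_impl (P Q : R -> Prop) : {ae mu, forall x, P x} ->
  (forall x, P x -> Q x) -> {ae mu, forall x, Q x}.
Proof.
move=> [N [mN N0 sub]] PQ; exists N; split => // x /= nQ; apply: sub => /= /PQ.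
exact: nQ.
Qed.

Lemma lt_aux (x y z : R) : 0 <= x -> 0 < y -> z < x + (y + z).
Proof. move=> *; lra. Qed.

End Helpers.

Theorem lemma4p4 (R : realType) (f : R -> R)
  (fmeas : measurable_fun (I01 R) f)
  (fL2 : (lebesgue_measure (R:=R)).-integrable (I01 R) (fun y => ((f y) ^+ 2)%:E))
  (fbnd : {ae lebesgue_measure (R:=R), forall y, I01 R y -> `|f y| < 1})
  (fneq : ~ {ae lebesgue_measure (R:=R), forall y, I01 R y -> f y = y}) :
  0 < Jhat R f.
Proof.
pose D := I01 R.
have mD : measurable D by exact: measurable_itv.
have Dsub : D `<=` `[0, 1] by apply: subset_itv; rewrite bnd_simp.
have mf : measurable_fun D (EFin \o f) by exact/measurable_EFinP.
have iF2 : (lebesgue_measure (R:=R)).-integrable D (EFin \o (fun y => f y ^+ 2)) := fL2.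
have iF : (lebesgue_measure (R:=R)).-integrable D (EFin \o f).
  have H1 := intD' _ _ _ mD iF2 (quad_int 1 0 0 _ _ _ Dsub mD).
  apply: (@le_integrable _ _ _ (lebesgue_measure (R:=R)) D mD _ _ mf _ H1).
  move=> x _ /=; rewrite lee_fin mul0r expr2 mul0r !addr0.
  rewrite (@ger0_norm _ (f x * f x + 1)); last by rewrite -expr2 addr_ge0 ?sqr_ge0.
  have [z0|z0] := leP 0 (f x); [rewrite ger0_norm // | rewrite ltr0_norm //]; nra.
have iYF : (lebesgue_measure (R:=R)).-integrable D (EFin \o (fun y => y * f y)).
  have mYF : measurable_fun D (fun y => y * f y).
    by apply: measurable_funM => //.
  move/measurable_EFinP : mYF => mYF.
  apply: (@le_integrable _ _ _ (lebesgue_measure (R:=R)) D mD _ _ mYF _ iF).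
  move=> x Dx /=; rewrite lee_fin normrM.
  move: Dx; rewrite /D /I01 /= in_itv /= => /andP[x0 x1].
  rewrite (ger0_norm (ltW x0)); apply: ler_piMl => //; exact: ltW.
pose mu := lebesgue_measure (R:=R).
pose cf c2 c1 al be ga := fun y : R =>
  c2 * f y ^+ 2 + c1 * (y * f y) + (al + be * y + ga * y ^+ 2).
have icomb c2 c1 al be ga : mu.-integrable D (EFin \o cf c2 c1 al be ga).
  exact: (intD' _ _ _ mD (intD' _ _ _ mD (intZ' _ c2 _ mD iF2) (intZ' _ c1 _ mD iYF))
    (quad_int al be ga _ _ _ Dsub mD)).
pose A2 := Rintegral mu D (fun y => f y ^+ 2).
pose A1 := Rintegral mu D (fun y => y * f y).
have comb c2 c1 al be ga : Rintegral mu D (cf c2 c1 al be ga) =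
    c2 * A2 + c1 * A1 + (al + be / 2 + ga / 3).
  rewrite /cf RintegralD //; last 2 first.
  - exact: (intD' _ _ _ mD (intZ' _ c2 _ mD iF2) (intZ' _ c1 _ mD iYF)).
  - exact: (quad_int al be ga _ _ _ Dsub mD).
  rewrite RintegralD //; last 2 first.
  - exact: (intZ' _ c2 _ mD iF2).
  - exact: (intZ' _ c1 _ mD iYF).
  rewrite !RintegralZl //.
  rewrite /D /I01 quad_oo ?ltr01 //.
  rewrite /A2 /A1 /D /I01; ring.
have eqa : L2dist2_id R f = Rintegral mu D (cf 1 (-2) 0 0 1).
  by rewrite /L2dist2_id; apply: eq_Rintegral => y _; rewrite /cf; ring.
have eqb : inner_fmid_fpid R f = Rintegral mu D (cf 1 0 0 0 (-1)).
  by rewrite /inner_fmid_fpid; apply: eq_Rintegral => y _; rewrite /cf; ring.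
have cfa y : cf 1 (-2) 0 0 1 y = (f y - y) ^+ 2 by rewrite /cf; ring.
have apos : 0 < Rintegral mu D (cf 1 (-2) 0 0 1).
  have ge0a : 0 <= Rintegral mu D (cf 1 (-2) 0 0 1).
    apply: Rintegral_ge0 => y _; move: (sqr_ge0 (f y - y)); rewrite -cfa => h.
    exact: h.
  rewrite lt_neqAle ge0a andbT; apply/eqP => H0.
  have [N [mN N0 sub]] := Rint_eq0 _ _ mD (icomb 1 (-2) 0 0 1)
    (fun y _ => (eq_ind_r (fun z => 0 <= z) (sqr_ge0 _) (cfa y))) (esym H0).
  apply: fneq; exists N; split => // y /= Hy.
  have Dy : D y.
    by apply: contrapT => nD; apply: Hy => /nD.
  apply: sub => //; rewrite cfa sqrf_eq0 subr_eq0; apply/eqP => e.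
  by apply: Hy => _.
have hL t : 0 < t ->
    0 <= Rintegral mu D (cf (t ^+ 2) (2 * t * (1 - t)) 0 0 ((1 - t) ^+ 2)).
  move=> t0; apply: Rintegral_ge0 => y _.
  have e : cf (t ^+ 2) (2 * t * (1 - t)) 0 0 ((1 - t) ^+ 2) y
      = (t * f y + (1 - t) * y) ^+ 2 by rewrite /cf; ring.
  move: (sqr_ge0 (t * f y + (1 - t) * y)); rewrite -e => h; exact: h.
have muD : (0 < mu D)%E.
  rewrite /mu /D /I01 lebesgue_measure_itv /= ifT; last by rewrite lte_fin ltr01.
  by rewrite oppr0 adde0 lte01.
have up1 t : 0 < t -> t <= 1 ->
    0 < Rintegral mu D (cf (- (1 - t)) (- 2 * t) (1 - t) (2 * t) 0).
  move=> t0 t1; apply: (Rint_gt0 _ _ mD (icomb _ _ _ _ _) muD).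
  case: fbnd => N [mN N0 sub]; exists N; split => // y /= nQ.
  apply: sub => /= fy; apply: nQ => Dy.
  move: Dy (fy Dy) => {fy}; rewrite /D /I01 /= in_itv /= => /andP[y0 y1] /ltr_normlP [fl fr].
  have h1 : 0 <= (1 - t) * (1 - f y ^+ 2).
    by apply: mulr_ge0; [lra | nra].
  have h2 : 0 < t * y * (1 - f y).
    by apply: mulr_gt0; [apply: mulr_gt0 | lra].
  rewrite /cf; nra.
have up2 t : 1 < t ->
    Rintegral mu `[(t - 1) / t, 1[
      (fun y => 1 + (- 2 * (t / (t - 1))) * y + (t / (t - 1)) ^+ 2 * y ^+ 2)
    < Rintegral mu D (cf 1 (- 2 * (t / (t - 1))) 0 0 ((t / (t - 1)) ^+ 2)).
  move=> t1.
  have t0 : 0 < t by lra.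
  have tm0 : 0 < t - 1 by lra.
  set m := t / (t - 1); set s := (t - 1) / t.
  have s0 : 0 < s by rewrite /s divr_gt0.
  have s1 : s < 1 by rewrite /s ltr_pdivrMr //; lra.
  have ms : m * s = 1 by rewrite /m /s; field; apply/andP; split; lra.
  have m0 : 0 < m by rewrite /m divr_gt0.
  have mS : measurable `[s, 1[ by exact: measurable_itv.
  have mS0 : measurable `]0, s[ by exact: measurable_itv.
  have SD : `[s, 1[ `<=` D by apply: subset_itv; rewrite bnd_simp.
  have eD : D = `]0, s[ `|` `[s, 1[.
    by rewrite /D /I01 -itv_bndbnd_setU // bnd_simp // ltW.
  have dis : [disjoint `]0, s[ & `[s, 1[].
    apply/disj_setPS => y [] /=; rewrite !in_itv /= => /andP[_ h1] /andP[h2 _].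
    lra.
  have ig := icomb 1 (- 2 * m) 0 0 (m ^+ 2).
  have -> : Rintegral mu D (cf 1 (- 2 * m) 0 0 (m ^+ 2)) =
      Rintegral mu `]0, s[ (cf 1 (- 2 * m) 0 0 (m ^+ 2)) +
      Rintegral mu `[s, 1[ (cf 1 (- 2 * m) 0 0 (m ^+ 2)).
    rewrite {1}eD Rintegral_setU //; by rewrite -eD.
  have cfm y : cf 1 (- 2 * m) 0 0 (m ^+ 2) y = (f y - m * y) ^+ 2.
    by rewrite /cf; ring.
  have g0 : 0 <= Rintegral mu `]0, s[ (cf 1 (- 2 * m) 0 0 (m ^+ 2)).
    apply: Rintegral_ge0 => y _; move: (sqr_ge0 (f y - m * y)); rewrite -cfm => h.
    exact: h.
  have iH : mu.-integrable `[s, 1[ (EFin \o cf 1 (- 2 * m) (-1) (2 * m) 0).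
    exact: (@integrableS _ _ _ mu D `[s, 1[ _ mD mS SD (icomb _ _ _ _ _)).
  have iq : mu.-integrable `[s, 1[
      (EFin \o (fun y => 1 + (- 2 * m) * y + m ^+ 2 * y ^+ 2)).
    by apply: (quad_int _ _ _ s 1) => //; apply: subset_itv; rewrite bnd_simp.
  have -> : Rintegral mu `[s, 1[ (cf 1 (- 2 * m) 0 0 (m ^+ 2)) =
      Rintegral mu `[s, 1[ (cf 1 (- 2 * m) (-1) (2 * m) 0) +
      Rintegral mu `[s, 1[ (fun y => 1 + (- 2 * m) * y + m ^+ 2 * y ^+ 2).
    rewrite -RintegralD //; apply: eq_Rintegral => y _; rewrite /cf; ring.
  have Hpos : 0 < Rintegral mu `[s, 1[ (cf 1 (- 2 * m) (-1) (2 * m) 0).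
    apply: (Rint_gt0 _ _ mS iH).
      rewrite lebesgue_measure_itv /= ifT; last by rewrite lte_fin.
      by rewrite -EFinB lte_fin subr_gt0.
    case: fbnd => N [mN N0 sub]; exists N; split => // y /= nQ.
    apply: sub => /= fy; apply: nQ => Sy.
    move: (fy (SD _ Sy)) => {fy}.
    move: Sy; rewrite /= in_itv /= => /andP[y0 y1] /ltr_normlP [fl fr].
    have my : 1 <= m * y by rewrite -ms ler_pM2l.
    have -> : cf 1 (- 2 * m) (-1) (2 * m) 0 y = (1 - f y) * (2 * (m * y) - f y - 1).
      by rewrite /cf; ring.
    by apply: mulr_gt0; lra.
  exact: lt_aux g0 Hpos.
have ea : Rintegral mu D (cf 1 (-2) 0 0 1) = A2 - 2 * A1 + 1 / 3.
  by rewrite comb; ring.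
have eb : Rintegral mu D (cf 1 0 0 0 (-1)) = A2 - 1 / 3.
  by rewrite comb; ring.
have apos' : 0 < A2 - 2 * A1 + 1 / 3 by rewrite -ea.
have bnd t : 0 < t ->
    `|A2 - 1 / 3| < t * (A2 - 2 * A1 + 1 / 3) + 1 / (3 * t).
  move=> t0.
  have lo : - (A2 - 1 / 3) < t * (A2 - 2 * A1 + 1 / 3) + 1 / (3 * t).
    have := hL t t0; rewrite comb => hl.
    have q := divr_ge0 hl (ltW t0).
    have e : t * (A2 - 2 * A1 + 1 / 3) + 1 / (3 * t) + (A2 - 1 / 3) =
        (A2 - 2 * A1 + 1 / 3) + (t ^+ 2 * A2 + 2 * t * (1 - t) * A1 +
        (0 + 0 / 2 + (1 - t) ^+ 2 / 3)) / t.
      by field; lra.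
    lra.
  have hi : A2 - 1 / 3 < t * (A2 - 2 * A1 + 1 / 3) + 1 / (3 * t).
    have [t1|t1] := leP t 1.
      have := up1 t t0 t1; rewrite comb => u.
      have aux : 1 <= (t + 1) / 3 + 1 / (3 * t).
        rewrite -subr_ge0.
        have -> : (t + 1) / 3 + 1 / (3 * t) - 1 = (t - 1) ^+ 2 / (3 * t).
          by field; lra.
        by apply: divr_ge0; [exact: sqr_ge0 | lra].
      lra.
    have hs : (t - 1) / t < 1 by rewrite ltr_pdivrMr //; lra.
    have := up2 t t1; rewrite comb quad_co // => u.
    have tm0 : 0 < t - 1 by lra.
    set W := (X in _ < X) in u; set V := (X in X < _) in u.
    have e : t * (A2 - 2 * A1 + 1 / 3) + 1 / (3 * t) - (A2 - 1 / 3) =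
        (t - 1) * (W - V).
      by rewrite /W /V; field; lra.
    have : 0 < (t - 1) * (W - V) by apply: mulr_gt0; lra.
    lra.
  by rewrite ltr_norml; apply/andP; split; lra.
rewrite /Jhat eqa eqb ea eb.
have [b0|b0] := eqVneq (A2 - 1 / 3) 0.
  by rewrite b0 expr2 mulr0 mulr0 subr0.
set a := A2 - 2 * A1 + 1 / 3 in apos' bnd *.
set b := A2 - 1 / 3 in b0 bnd *.
have B0 : 0 < `|b| by rewrite normr_gt0.
have t0 : 0 < `|b| / (2 * a) by apply: divr_gt0 => //; lra.
have := bnd _ t0.
have -> : `|b| / (2 * a) * a + 1 / (3 * (`|b| / (2 * a))) =
    `|b| / 2 + (2 * a / 3) / `|b|.
  by field; apply/andP; split; lra.
rewrite -(ltr_pM2l B0).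
have -> : `|b| * (`|b| / 2 + 2 * a / 3 / `|b|) = `|b| * `|b| / 2 + 2 * a / 3.
  by field; lra.
have -> : `|b| * `|b| = b ^+ 2 by rewrite -expr2 real_normK ?num_real.
move=> h; lra.
Qed.
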